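(* Let $G_1$ and $G_2$ be directed graphs without self-loops on the common vertex set $[n]=\{1,\dots,n\}$. If $G_1$ and $G_2$ are distribution equivalent, i.e. $\mathcal{P}(G_1)=\mathcal{P}(G_2)$, then $G_1$ and $G_2$ have the same strongly connected components (the partitions of $[n]$ into strongly connected components of $G_1$ and of $G_2$ coincide).
   Context: For a directed graph $G$ on $[n]$ without self-loops, let $B_G\in\{0,1\}^{n\times n}$ be its adjacency matrix with $[B_G]_{ij}=1$ iff there is an edge $j\to i$. A linear structural causal model consistent with $G$ is $\mathbf{x}=W\mathbf{x}+\mathbf{e}$ where $W\in\mathbb{R}^{n\times n}$ has $\{(i,j):W_{ij}\neq 0\}=\{(i,j):[B_G]_{ij}=1\}$, $I-W$ is invertible, and the noise vector $\mathbf{e}$ has jointly independent components of which at most one is Gaussian. The distribution set $\mathcal{P}(G)$ is the set of all distributions of $\mathbf{x}=(I-W)^{-1}\mathbf{e}$ arising from all such $W$ and all such noise distributions. $G_1,G_2$ are distribution equivalent if $\mathcal{P}(G_1)=\mathcal{P}(G_2)$. Two vertices $u,v$ are strongly connected if there are directed paths from $u$ to $v$ and from $v$ to $u$; the equivalence classes of this relation are the strongly connected components. *)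

(* Defs.v *)
From HB Require Import structures.
From mathcomp Require Import all_boot all_order all_algebra.
From mathcomp Require Import all_classical all_reals all_analysis.
Set Implicit Arguments. Unset Strict Implicit. Unset Printing Implicit Defensive.
Import Order.TTheory GRing.Theory Num.Theory.
Local Open Scope classical_set_scope.
Local Open Scope ring_scope.

(* Directed graphs on [n] are relations on 'I_n : [G j i] means an edge j -> i.
   The adjacency matrix B_G has [B_G]_{ij} = 1 iff G j i. *)
Definition no_self_loops n (G : rel 'I_n) : Prop := forall i, ~~ G i i.

Definition consistent_with n (R : realType) (G : rel 'I_n) (W : 'M[R]_n) : Prop :=
  forall i j, (W i j != 0) = G j i.

Definition box_sets n (R : realType) : set (set 'rV[R]_n) :=
  [set A | exists B : 'I_n -> set R,
     (forall i, measurable (B i)) /\ A = [set v : 'rV[R]_n | forall i, B i (v ord0 i)]].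

Definition Rn_measurable n (R : realType) : set (set 'rV[R]_n) :=
  <<s @box_sets n R >>.

Definition law n (R : realType) d (T : measurableType d) (P : probability T R)
  (X : T -> 'rV[R]_n) : set 'rV[R]_n -> \bar R :=
  fun A => if pselect (Rn_measurable A) then P (X @^-1` A) else 0%E.

Definition jointly_independent n (R : realType) d (T : measurableType d)
  (P : probability T R) (e : 'I_n -> T -> R) : Prop :=
  forall B : 'I_n -> set R, (forall i, measurable (B i)) ->
    P (\bigcap_(i in [set: 'I_n]) (e i @^-1` B i)) =
    (\prod_(i < n) P (e i @^-1` B i))%E.

Definition is_gaussian (R : realType) d (T : measurableType d)
  (P : probability T R) (X : T -> R) : Prop :=
  exists (m s : R), 0 < s /\
    forall B : set R, measurable B -> P (X @^-1` B) = normal_prob m s B.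

(* The distribution set P(G) of linear SCMs x = W x + e consistent with G. *)
Definition distribution_set n (R : realType) (G : rel 'I_n)
  : set (set 'rV[R]_n -> \bar R) :=
  [set mu | exists (W : 'M[R]_n) (d : measure_display) (T : measurableType d)
       (P : probability T R) (e : 'I_n -> T -> R),
     [/\ consistent_with G W /\ (1%:M - W) \in unitmx,
         (forall i, measurable_fun setT (e i)),
         jointly_independent P e,
         (forall i j, is_gaussian P (e i) -> is_gaussian P (e j) -> i = j) &
         mu = law P (fun t => (\row_j e j t) *m (invmx (1%:M - W))^T)]].

Arguments distribution_set {n} R G.

Definition strongly_connected n (G : rel 'I_n) (u v : 'I_n) : bool :=
  connect G u v && connect G v u.

(* Main.v *)
Require Import Defs.
From HB Require Import structures.
From mathcomp Require Import all_boot all_order all_algebra.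
From mathcomp Require Import all_classical all_reals all_analysis.
Set Implicit Arguments. Unset Strict Implicit. Unset Printing Implicit Defensive.
Import Order.TTheory GRing.Theory Num.Theory.
Local Open Scope classical_set_scope.
Local Open Scope ring_scope.

Definition bits (n : nat) := {ffun 'I_n -> bool}.
HB.instance Definition _ n := Finite.on (bits n).
HB.instance Definition _ n := isPointed.Build (bits n) [ffun=> false].
HB.instance Definition _ n := @isMeasurable.Build default_measure_display
  (bits n) discrete_measurable discrete_measurable0
  discrete_measurableC discrete_measurableU.

Lemma wr_ge0 (R : realType) n : (0 : R) <= (2^-1) ^+ n.
Proof. by apply: exprn_ge0; rewrite invr_ge0. Qed.

Definition wr (R : realType) n : {nonneg R} := NngNum (wr_ge0 R n).

Definition unifP (R : realType) n : set (bits n) -> \bar R :=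
  mscale (wr R n) (msum (fun k => \d_(nth [ffun=> false] (enum (bits n)) k : bits n)) #|bits n|).

Arguments unifP : clear implicits.

Lemma unifPE (R : realType) n (A : set (bits n)) :
  unifP R n A = (\sum_(t : bits n) (2^-1) ^+ n * \1_A t)%:E.
Proof.
rewrite /unifP /mscale /msum /= -mulr_sumr EFinM; congr (_ * _)%E.
rewrite -sumEFin.
transitivity (\sum_(0 <= k < size (enum (bits n))) (fun t : bits n => @dirac _ (bits n) t R A) (nth [ffun=> false] (enum (bits n)) k))%E.
  by rewrite big_mkord cardE.
rewrite -(big_nth [ffun=> false] xpredT (fun t : bits n => @dirac _ (bits n) t R A)).
rewrite big_enum /=.
apply: eq_bigr => t _; by rewrite diracE indicE.
Qed.

HB.instance Definition _ (R : realType) n := Measure.on (unifP R n).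

Lemma unifP_setT (R : realType) n : unifP R n setT = 1%E.
Proof.
rewrite unifPE; congr (_%:E).
under eq_bigr do rewrite indicE in_setT mulr1.
rewrite sumr_const card_ffun card_bool card_ord.
idtac.
rewrite -(mulr_natr ((2^-1)^+n) (2^n)) natrX -exprMn mulVf ?expr1n // pnatr_eq0.
Qed.

HB.instance Definition _ (R : realType) n :=
  @Measure_isProbability.Build _ _ R (unifP R n) (unifP_setT R n).


Lemma indic_bigcapT (R : realType) n (T : Type) (C : 'I_n -> set T) (t : T) :
  \1_(\bigcap_(i in [set: 'I_n]) C i) t = \prod_(i < n) (\1_(C i) t : R).
Proof.
rewrite indicE; have [H|H] := pselect (forall i, C i t).
  rewrite mem_set; last by move=> i _; exact: H.
  by rewrite big1 // => i _; rewrite indicE mem_set.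
have [i Hi] : exists i, ~ C i t.
  by apply: contra_notP H => H i; apply: contra_notP H => Hi; exists i.
rewrite memNset; last by move=> HC; apply: Hi; exact: HC.
by rewrite (bigD1 i) //= indicE memNset // mul0r.
Qed.

Definition ebit (R : realType) n (i : 'I_n) (t : bits n) : R := (t i)%:R.

Lemma unif_bigcap (R : realType) n (B : 'I_n -> set R) :
  unifP R n (\bigcap_(i in [set: 'I_n]) (ebit R i @^-1` B i)) =
  (\prod_(i < n) \sum_(b : bool) 2^-1 * \1_(B i) (b%:R : R))%:E.
Proof.
rewrite unifPE; congr (_%:E).
rewrite bigA_distr_bigA /=.
apply: eq_bigr => t _.
rewrite indic_bigcapT big_split /= prodr_const card_ord.
by [].
Qed.

Lemma unif_marg (R : realType) n (i0 : 'I_n) (B : set R) :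
  unifP R n (ebit R i0 @^-1` B) = (\sum_(b : bool) 2^-1 * \1_B (b%:R : R))%:E.
Proof.
have -> : ebit R i0 @^-1` B = \bigcap_(i in [set: 'I_n])
    (ebit R i @^-1` (if i == i0 then B else setT)).
  rewrite eqEsubset; split => t /=.
    by move=> Bt i _ /=; case: eqP => [->|].
  by move=> /(_ i0 I) /=; rewrite eqxx.
rewrite unif_bigcap (bigD1 i0) //= eqxx [X in _ * X]big1 ?mulr1 // => i /negbTE ->.
by rewrite big_bool /= !indicE !in_setT /= mulr1 -div1r -splitr.
Qed.

Lemma unif_indep (R : realType) n :
  jointly_independent (unifP R n) (@ebit R n).
Proof.
move=> B _; apply: (etrans (unif_bigcap B)); rewrite -prodEFin.
by apply: eq_bigr => i _; apply/esym; exact: unif_marg.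
Qed.

Lemma ebit_not_gaussian (R : realType) n (i : 'I_n) :
  ~ is_gaussian (unifP R n) (ebit R i).
Proof.
move=> [m [s [s0 H]]].
have := H [set 0] (measurable_set1 0).
have -> : normal_prob m s [set (0:R)] = 0%E.
  have N0 : (@lebesgue_measure R).-null_set [set 0].
    by apply/measure0_null_setP; [exact: measurable_set1|exact: lebesgue_measure_set1].
  exact: (normal_prob_dominates m s N0 (measurable_set1 0)).
move=> H0.
have : unifP R n (ebit R i @^-1` [set 0]) = 0%E by exact: H0.
rewrite unif_marg big_bool /= !indicE.
rewrite (@mem_set _ [set (0:R)] 0) // (@memNset _ [set (0:R)] 1); last first.
  by move=> /= /eqP; rewrite oner_eq0.
rewrite mulr0 mulr1 add0r => /(congr1 fine) /= /eqP.
by rewrite invr_eq0 pnatr_eq0.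
Qed.

Lemma unitmx_shift (R : realType) n (B : 'M[R]_n) (x : R) :
  ~~ root (char_poly B) x -> (x%:M - B) \in unitmx.
Proof.
move=> Hx; rewrite unitmxE unitfE; apply/negP => /det0P [v v0 Hv].
move: Hx; rewrite -eigenvalue_root_char => /negP; apply.
apply/eigenvalueP; exists v => //.
by apply/eqP; rewrite -mul_mx_scalar eq_sym -subr_eq0 -mulmxBr Hv.
Qed.

Lemma exists_nonroot (R : realType) n (B : 'M[R]_n) :
  exists k : nat, ~~ root (char_poly B) (k.+1)%:R.
Proof.
apply: contrapT => H.
have Hr : all (root (char_poly B)) [seq (k.+1)%:R | k <- iota 0 n.+1].
  apply/allP => x /mapP [k _ ->]; apply: contrapT => /negP Hk.
  by apply: H; exists k.
have U : uniq [seq (k.+1)%:R : R | k <- iota 0 n.+1].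
  rewrite map_inj_uniq ?iota_uniq // => a b /eqP.
  by rewrite eqr_nat => /eqP [].
have := max_poly_roots (monic_neq0 (char_poly_monic B)) Hr U.
by rewrite size_map size_iota size_char_poly ltnn.
Qed.

Lemma exists_W (R : realType) n (G : rel 'I_n) :
  exists W : 'M[R]_n, consistent_with G W /\ (1%:M - W) \in unitmx.
Proof.
pose B : 'M[R]_n := \matrix_(i, j) (G j i)%:R.
have [k Hk] := exists_nonroot B.
set x : R := (k.+1)%:R in Hk.
have x0 : x != 0 by rewrite pnatr_eq0.
exists (x^-1 *: B); split.
  move=> i j; rewrite !mxE; case: (G j i) => /=.
    by rewrite mulr1 invr_eq0.
  by rewrite mulr0 eqxx.
have -> : 1%:M - x^-1 *: B = x^-1 *: (x%:M - B).
  by rewrite scalerBr scale_scalar_mx mulVf.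
by rewrite unitmxZ ?unitfE ?invr_eq0 // unitmx_shift.
Qed.

Definition X1 (R : realType) n (W : 'M[R]_n) (t : bits n) : 'rV[R]_n :=
  (\row_j ebit R j t) *m (invmx (1%:M - W))^T.

Lemma singleton_box (R : realType) n (p : 'rV[R]_n) : @box_sets n R [set p].
Proof.
exists (fun i => [set p ord0 i]); split; first by move=> i; exact: measurable_set1.
rewrite eqEsubset; split => v /=; first by move=> -> i.
by move=> H; apply/rowP => i; apply: H.
Qed.

Lemma Rn_setU (R : realType) n (A B : set 'rV[R]_n) :
  Rn_measurable A -> Rn_measurable B -> Rn_measurable (A `|` B).
Proof.
move=> HA HB; rewrite -bigcup2E; apply: sigma_algebra_bigcup => -[|[|k]] //=.
exact: sigma_algebra0.
Qed.

Lemma Rn_finite (R : realType) n (S : set 'rV[R]_n) :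
  finite_set S -> Rn_measurable S.
Proof.
move=> /finite_seqP [s ->]; elim: s => [|x s IH].
  have -> : [set` [::]] = (set0 : set 'rV[R]_n).
    by rewrite eqEsubset; split => v //=.
  exact: sigma_algebra0.
have -> : [set` (x :: s)] = [set x] `|` [set` s].
  rewrite eqEsubset; split => v /=; rewrite in_cons.
    by case/orP => [/eqP ->|H]; [left|right].
  by case => [->|H]; rewrite ?eqxx // H orbT.
apply: Rn_setU => //; apply: sub_sigma_algebra; exact: singleton_box.
Qed.

Lemma transfer_indep (R : realType) n (W1 W2 : 'M[R]_n) d (T : measurableType d)
  (P : probability T R) (e : 'I_n -> T -> R) :
  (1%:M - W2) \in unitmx ->
  (forall i, measurable_fun setT (e i)) ->
  jointly_independent P e ->
  law (unifP R n) (X1 W1) = law P (fun t => (\row_j e j t) *m (invmx (1%:M - W2))^T) ->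
  forall (k l : 'I_n) (a b : R), k != l ->
  unifP R n [set t | (X1 W1 t *m (1%:M - W2)^T) ord0 k = a /\
                     (X1 W1 t *m (1%:M - W2)^T) ord0 l = b] =
  (unifP R n [set t | (X1 W1 t *m (1%:M - W2)^T) ord0 k = a] *
   unifP R n [set t | (X1 W1 t *m (1%:M - W2)^T) ord0 l = b])%E.
Proof.
move=> U2 me ind Heq k l a b kl.
set X2 := fun t => (\row_j e j t) *m (invmx (1%:M - W2))^T.
have HeqS S : law (unifP R n) (X1 W1) S = law P X2 S by rewrite Heq.
set D2 := (1%:M - W2)^T.
have hXD s : X2 s *m D2 = \row_j e j s.
  by rewrite /X2 /D2 -mulmxA -trmx_mul mulmxV // trmx1 mulmx1.
have hDC : D2 *m (invmx (1%:M - W2))^T = 1%:M.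
  by rewrite /D2 -trmx_mul mulVmx // trmx1.
have hX2 s p : X2 s = p <-> \row_j e j s = p *m D2.
  split; first by rewrite -hXD => ->.
  by move=> H; rewrite /X2 H -mulmxA hDC mulmx1.
have mpre j (Y : set R) : measurable Y -> measurable (e j @^-1` Y).
  by move=> mY; have := me j measurableT Y mY; rewrite setTI.
have mpt p : measurable (X2 @^-1` [set p]).
  have -> : X2 @^-1` [set p] =
      \bigcap_(j in [set: 'I_n]) (e j @^-1` [set (p *m D2) ord0 j]).
    rewrite eqEsubset; split => s /=.
      move=> Hs j _; have H := (hX2 s p).1 Hs; by rewrite /= -H mxE.
    move=> H; apply/(hX2 s p).
    apply/matrixP => i j; rewrite [i]ord1 mxE; exact: H j I.
  apply: fin_bigcap_measurable; first exact: finite_finset.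
  by move=> j _; apply: mpre; exact: measurable_set1.
set F := range (X1 W1).
have finF : finite_set F by apply: finite_image; exact: finite_finset.
have mpreF S : S `<=` F -> measurable (X2 @^-1` S).
  move=> SF.
  have -> : S = \bigcup_(t in [set t | S (X1 W1 t)]) [set X1 W1 t].
    rewrite eqEsubset; split => v.
      move=> Sv; have [t _ Ht] := SF v Sv.
      by exists t => //=; rewrite Ht.
    by move=> [t /= St ->].
  rewrite preimage_bigcup; apply: fin_bigcup_measurable; first exact: finite_finset.
  by move=> t _; exact: mpt.
have lawE d' (T' : measurableType d') (Q : probability T' R) (X : T' -> 'rV[R]_n) S :
    Rn_measurable S -> law Q X S = Q (X @^-1` S).
  by move=> HS; rewrite /law; case: pselect.
have X1F : X1 W1 @^-1` F = setT.
  by rewrite eqEsubset; split => t // _; exists t.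
have PF : P (X2 @^-1` F) = 1%E.
  have RF : Rn_measurable F by exact: Rn_finite.
  rewrite -(lawE _ _ P X2 _ RF) -HeqS (lawE _ _ (unifP R n) (X1 W1) _ RF).
  by rewrite X1F probability_setT.
have transfer (A : set 'rV[R]_n) : measurable (X2 @^-1` A) ->
    P (X2 @^-1` A) = unifP R n (X1 W1 @^-1` A).
  move=> mA.
  have mF : measurable (X2 @^-1` F) by exact: mpreF.
  have mAF : measurable (X2 @^-1` (A `&` F)) by apply: mpreF; exact: subIsetr.
  have E : X2 @^-1` A = X2 @^-1` (A `&` F) `|` (X2 @^-1` A `&` ~` (X2 @^-1` F)).
    rewrite eqEsubset; split => s /=.
      by move=> As; case: (pselect (F (X2 s))) => Fs; [left|right].
    by case => [[]|[]].
  have mN : measurable (X2 @^-1` A `&` ~` (X2 @^-1` F)).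
    by apply: measurableI => //; exact: measurableC.
  rewrite E measureU0 //; last first.
    apply/eqP; rewrite eq_le measure_ge0 andbT.
    apply: (@le_trans _ _ (P (~` (X2 @^-1` F)))).
      apply: le_measure; last exact: subIsetr.
        by rewrite inE.
      by rewrite inE; exact: measurableC.
    by rewrite probability_setC // PF subee.
  have mAF' : Rn_measurable (A `&` F).
    by apply: Rn_finite; apply: (sub_finite_set _ finF); exact: subIsetr.
  transitivity (law P X2 (A `&` F)); first by rewrite /law; case: pselect.
  rewrite -HeqS /law; case: pselect => // Hm.
  by rewrite preimage_setI X1F setIT.
have lk : l != k by rewrite eq_sym.
have ek k' a' : e k' @^-1` [set a'] = X2 @^-1` [set v | (v *m D2) ord0 k' = a'].
  by rewrite eqEsubset; split => s /=; rewrite hXD mxE.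
have ekl : e k @^-1` [set a] `&` e l @^-1` [set b] =
    X2 @^-1` [set v | (v *m D2) ord0 k = a /\ (v *m D2) ord0 l = b].
  by rewrite eqEsubset; split => s /=; rewrite hXD !mxE.
have mek k' a' : measurable (e k' @^-1` [set a']).
  by apply: mpre; exact: measurable_set1.
have Hind : P (e k @^-1` [set a] `&` e l @^-1` [set b]) =
    (P (e k @^-1` [set a]) * P (e l @^-1` [set b]))%E.
  pose B i := if i == k then [set a] else if i == l then [set b] else setT.
  have := ind B; rewrite /B.
  have mB : forall i, measurable (if i == k then [set a] else if i == l then [set b] else setT).
    by move=> i; case: ifP => _; [|case: ifP => _]; rewrite ?measurable_set1.
  move=> /(_ mB).
  have -> : \bigcap_(i in [set: 'I_n]) e i @^-1`
      (if i == k then [set a] else if i == l then [set b] else setT) =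
      e k @^-1` [set a] `&` e l @^-1` [set b].
    rewrite eqEsubset; split => s /=.
      move=> H; split; first by have := H k I; rewrite eqxx.
      by have := H l I; rewrite (negbTE lk) eqxx.
    move=> [Ha Hb] i _ /=.
    by case: eqP => [->|_] //; case: eqP => [->|_].
  move=> ->; rewrite (bigD1 k) //= eqxx (bigD1 l) //= (negbTE lk) eqxx.
  rewrite [X in (_ * (_ * X))%E]big1 ?mule1 // => i /andP [ik il].
  by rewrite (negbTE ik) (negbTE il) preimage_setT probability_setT.
transitivity (P (e k @^-1` [set a] `&` e l @^-1` [set b])).
  by rewrite ekl transfer // -ekl; apply: measurableI.
by rewrite Hind (ek k a) (ek l b) !transfer // -?ek.
Qed.

Definition sc (R : realType) n (t : bits n) (c : 'I_n -> R) : R :=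
  \sum_j (t j)%:R * c j.

Definition tmax (R : realType) n (c : 'I_n -> R) : bits n := [ffun j => 0 < c j].

Lemma sc_le (R : realType) n (c : 'I_n -> R) t : sc t c <= sc (tmax c) c.
Proof.
apply: ler_sum => j _; rewrite ffunE.
case: (t j); case: ltP => h /=; rewrite ?mul1r ?mul0r //.
- exact: ltW.
Qed.

Lemma sc_eq (R : realType) n (c : 'I_n -> R) t :
  sc t c = sc (tmax c) c -> forall j, c j != 0 -> t j = (0 < c j).
Proof.
move=> E j cj; apply/eqP; apply: contraT => Hj.
have : sc t c < sc (tmax c) c.
  rewrite /sc (bigD1 j) //= [X in _ < X](bigD1 j) //= ffunE.
  apply: ltr_leD; last first.
    apply: ler_sum => i _; rewrite ffunE.
    case: (t i); case: ltP => h /=; rewrite ?mul1r ?mul0r //; exact: ltW.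
  move: Hj; case: (t j); case: ltP => h /=; rewrite ?mul1r ?mul0r //.
  by move=> _; rewrite lt_neqAle cj h.
by rewrite E ltxx.
Qed.

Lemma sc_neg (R : realType) n (c : 'I_n -> R) t :
  sc t (fun j => - c j) = - sc t c.
Proof. by rewrite /sc -sumrN; apply: eq_bigr => j _; rewrite mulrN. Qed.

Lemma unifP_neq0 (R : realType) n (S : set (bits n)) t0 :
  S t0 -> (\sum_(t : bits n) (2^-1) ^+ n * \1_S t : R) != 0.
Proof.
move=> St0.
have H0 : forall i : bits n, true -> (0:R) <= (2^-1) ^+ n * \1_S i.
  move=> i _; apply: mulr_ge0; first exact: wr_ge0.
  by rewrite indicE ler0n.
apply/eqP => /(psumr_eq0P H0) H.
have := H t0 isT; rewrite indicE mem_set // mulr1 => /eqP.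
by rewrite expf_eq0 invr_eq0 pnatr_eq0 andbF.
Qed.

Lemma unifP_set0 (R : realType) n (S : set (bits n)) :
  (forall t, ~ S t) -> (\sum_(t : bits n) (2^-1) ^+ n * \1_S t : R) = 0.
Proof.
move=> H; apply: big1 => t _; rewrite indicE memNset ?mulr0 //; exact: H.
Qed.

Lemma col_disjoint (R : realType) n (N : 'M[R]_n) (y : bits n -> 'I_n -> R) :
  (forall t k, y t k = sc t (fun j => N j k)) ->
  (forall (k l : 'I_n) (a b : R), k != l ->
     unifP R n [set t | y t k = a /\ y t l = b] =
     (unifP R n [set t | y t k = a] * unifP R n [set t | y t l = b])%E) ->
  forall i k l, k != l -> N i k = 0 \/ N i l = 0.
Proof.
move=> hy ind i k l kl.
case: (eqVneq (N i k) 0) => [->|nk]; first by left.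
case: (eqVneq (N i l) 0) => [->|nl]; first by right.
exfalso.
pose ck := fun j => N j k; pose cl := fun j => N j l; pose cl' := fun j => - N j l.
have forcek t : y t k = sc (tmax ck) ck -> t i = (0 < N i k).
  by rewrite hy => /sc_eq; apply.
have forcel t : y t l = sc (tmax cl) cl -> t i = (0 < N i l).
  by rewrite hy => /sc_eq; apply.
have forcel' t : y t l = - sc (tmax cl') cl' -> t i = (0 < - N i l).
  rewrite hy => H; apply: (@sc_eq R n cl') => //; last by rewrite oppr_eq0.
  by rewrite sc_neg H opprK.
have key : forall a b, (forall t, y t k = a -> y t l = b -> False) ->
    (exists t, y t k = a) -> (exists t, y t l = b) -> False.
  move=> a b Hab [ta Ha] [tb Hb].
  have := ind k l a b kl; rewrite !unifPE -EFinM => -[].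
  rewrite unifP_set0; last by move=> t [h1 h2]; exact: Hab h1 h2.
  move/esym/eqP; rewrite mulf_eq0.
  by rewrite (negbTE (@unifP_neq0 R n [set t | y t k = a] ta Ha)) (negbTE (@unifP_neq0 R n [set t | y t l = b] tb Hb)).
have Ek : exists t, y t k = sc (tmax ck) ck by exists (tmax ck); rewrite hy.
have nl' : (0 < N i l) != (0 < - N i l).
  rewrite oppr_gt0; move: nl; rewrite neq_lt => /orP [h|h].
    by rewrite h ltNge ltW.
  by rewrite h ltNge ltW.
case: (eqVneq (0 < N i k) (0 < N i l)) => E.
  apply: (key _ (- sc (tmax cl') cl')) Ek _.
    move=> t /forcek h1 /forcel' h2; move: nl'; by rewrite -E -h1 -h2 eqxx.
  by exists (tmax cl'); rewrite hy sc_neg opprK.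
apply: (key _ (sc (tmax cl) cl)) Ek _.
  move=> t /forcek h1 /forcel h2; move: E; by rewrite -h1 -h2 eqxx.
by exists (tmax cl); rewrite hy.
Qed.

Lemma unit_row_nz (R : realType) n (M : 'M[R]_n) :
  M \in unitmx -> forall i, exists k, M i k != 0.
Proof.
move=> U i; apply: contrapT => H.
have Z : forall k, M i k = 0.
  by move=> k; apply/eqP; apply: contrapT => /negP Hk; apply: H; exists k.
move: U; rewrite unitmxE (expand_det_row M i) big1 ?unitr0 // => j _.
by rewrite Z mul0r.
Qed.

Lemma perm_struct (R : realType) n (N : 'M[R]_n) :
  N \in unitmx -> (forall i k l, k != l -> N i k = 0 \/ N i l = 0) ->
  exists s : 'I_n -> 'I_n, injective s /\ (forall i k, (N i k != 0) = (k == s i)).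
Proof.
move=> U D.
have [s Hs] := fin_all_exists (unit_row_nz U).
have Hs2 : forall i k, (N i k != 0) = (k == s i).
  move=> i k; case: (eqVneq k (s i)) => [->|ks]; first exact: Hs.
  by case: (D i k (s i) ks) => [->|/eqP H]; [rewrite eqxx|move: (Hs i); rewrite H].
have surj : forall k, exists i, s i == k.
  move=> k; have [i Hi] := unit_row_nz (etrans (unitmx_tr N) U) k.
  by exists i; move: Hi; rewrite mxE Hs2 eq_sym.
have [g Hg] := fin_all_exists surj.
have ginj : injective g.
  by move=> a b E; rewrite -(eqP (Hg a)) -(eqP (Hg b)) E.
have [g' gK g'K] := injF_bij ginj.
exists s; split => //.
have sE : forall y, s y = g' y.
  by move=> y; rewrite -{1}(g'K y); exact/eqP/Hg.
by move=> a b; rewrite !sE => /(can_inj g'K).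
Qed.

Lemma conn_sub (R : realType) n (G1 G2 : rel 'I_n) (W1 W2 N : 'M[R]_n)
  (s : 'I_n -> 'I_n) :
  no_self_loops G2 -> consistent_with G1 W1 -> consistent_with G2 W2 ->
  injective s -> (forall i k, (N i k != 0) = (k == s i)) ->
  (1%:M - W1)^T *m N = (1%:M - W2)^T ->
  forall u v, connect G2 u v -> connect G1 u v.
Proof.
move=> nl2 c1 c2 sinj HN E.
have rel i j : (1%:M - W2) (s i) j = (1%:M - W1) i j * N i (s i).
  have := congr1 (fun M : 'M[R]_n => M j (s i)) E => /=; rewrite [in RHS]mxE => <-.
  rewrite mxE (bigD1 i) //= big1 ?addr0; first by rewrite mxE.
  move=> m mi; apply/eqP; rewrite mulf_eq0; apply/orP; right.
  apply: contraT; rewrite HN => /eqP H.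
  by move: mi; rewrite (sinj _ _ H) eqxx.
have W1E i j : ((1%:M - W1) i j != 0) -> (i == j) || G1 j i.
  rewrite !mxE -c1; case: (eqVneq i j) => [//|ij]; rewrite /= subr_eq0.
  by rewrite eq_sym; case: (eqVneq (W1 i j) 0) => //= ->; rewrite eqxx.
have step i : connect G1 (s i) i.
  have : (1%:M - W2) (s i) (s i) != 0.
    rewrite !mxE eqxx /=; have : W2 (s i) (s i) = 0.
      by apply/eqP; apply: contraT; rewrite c2 => H; move: (nl2 (s i)); rewrite H.
    by move=> ->; rewrite subr0 oner_eq0.
  rewrite rel mulf_eq0 negb_or => /andP [/W1E /orP [/eqP Ei|H] _].
    by rewrite -Ei; exact: connect0.
  exact: connect1.
have [s' sK s'K] := injF_bij sinj.
have back i : connect G1 i (s i).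
  have : fconnect s (s i) i.
    by rewrite fconnect_sym //; exact: fconnect1.
  move=> H.
  have sub : subrel (frel s) (connect [rel x y | G1 y x]).
    by move=> x y /eqP <-; rewrite connect_rev /=; exact: step.
  have := connect_sub sub H.
  by rewrite connect_rev.
apply: connect_sub => j k Hjk.
have jk : j != k by apply: contraTneq Hjk => ->; exact: nl2.
set i := s' k.
have sik : s i = k by rewrite /i s'K.
have : (1%:M - W2) (s i) j != 0.
  rewrite sik !mxE (eq_sym k j) (negbTE jk) /= sub0r oppr_eq0 c2; exact: Hjk.
rewrite rel mulf_eq0 negb_or => /andP [/W1E /orP [/eqP ij|Hji] _].
  by rewrite -sik -ij; exact: back.
by apply: connect_trans (connect1 Hji) _; rewrite -sik; exact: back.
Qed.

Lemma dist_G (R : realType) n (G : rel 'I_n) (W : 'M[R]_n) :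
  consistent_with G W -> (1%:M - W) \in unitmx ->
  distribution_set R G (law (unifP R n) (X1 W)).
Proof.
move=> c U.
exists W, default_measure_display, (bits n), (unifP R n), (@ebit R n).
split.
- by split.
- by move=> i _ Y _.
- exact: unif_indep.
- by move=> i j /ebit_not_gaussian.
- by [].
Qed.

Lemma half (R : realType) n (G1 G2 : rel 'I_n) :
  no_self_loops G2 -> distribution_set R G1 `<=` distribution_set R G2 ->
  forall u v, connect G2 u v -> connect G1 u v.
Proof.
move=> nl2 sub.
have [W1 [c1 U1]] := exists_W R G1.
have := sub _ (dist_G c1 U1) => -[W2 [d2 [T2 [P2 [e2 [[c2 U2] me ind _ Heq]]]]]].
have ti := transfer_indep U2 me ind Heq.
pose N := (invmx (1%:M - W1))^T *m (1%:M - W2)^T.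
have hy t k : (X1 W1 t *m (1%:M - W2)^T) ord0 k = sc t (fun j => N j k).
  rewrite /X1 -mulmxA mxE; apply: eq_bigr => j _; by rewrite mxE.
have D := col_disjoint hy ti.
have UN : N \in unitmx by rewrite unitmx_mul !unitmx_tr unitmx_inv U1 U2.
have [s [sinj Hs]] := perm_struct UN D.
apply: (conn_sub nl2 c1 c2 sinj Hs).
by rewrite /N mulmxA -trmx_mul mulVmx // trmx1 mul1mx.
Qed.

Theorem theorem1 (R : realType) (n : nat) (G1 G2 : rel 'I_n) :
  no_self_loops G1 -> no_self_loops G2 ->
  distribution_set R G1 = distribution_set R G2 ->
  forall u v : 'I_n, strongly_connected G1 u v = strongly_connected G2 u v.
Proof.
move=> nl1 nl2 Heq.
have E u v : connect G1 u v = connect G2 u v.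
  have S12 : distribution_set R G1 `<=` distribution_set R G2 by rewrite Heq.
  have S21 : distribution_set R G2 `<=` distribution_set R G1 by rewrite Heq.
  apply/idP/idP.
    exact: (half nl1 S21).
  exact: (half nl2 S12).
by move=> u v; rewrite /strongly_connected !E.
Qed.
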